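(* Let $X$ be a supertropical semiring and $a\in X$. (1) The fiber $\nu^{-1}(a)$ is non-empty if and only if $a\in\nu X$; in this case $a$ is the largest element of $\nu^{-1}(a)$ with respect to the intrinsic order. (2) Any two distinct elements of $\nu^{-1}(a)\setminus\{a\}$ are incomparable in the intrinsic order.
   Context: A semiring $(X,+,0,\cdot)$: $(X,+,0)$ commutative monoid, $(X,\cdot)$ semigroup, distributivity, $0$ absorbing. Intrinsic order: $a\le b$ iff $a+x=b$ for some $x$. $\nu:X\to X$, $\nu(x)=x+x$; $\nu X=\{a: a=a+a\}$. A supertropical semiring is a unital commutative semiring with $2=4$ (where $n=1+\dots+1$), such that $a+b\in\{a,b\}$ whenever $\nu(a)\ne\nu(b)$, and $a+b=\nu(a)$ whenever $\nu(a)=\nu(b)$. *)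

(* Defs.v *)
From HB Require Import structures.
From mathcomp Require Import all_boot all_algebra.
Set Implicit Arguments. Unset Strict Implicit. Unset Printing Implicit Defensive.
Import GRing.Theory.
Local Open Scope ring_scope.

(* A unital commutative semiring is a comPzSemiRingType (0 absorbing and
   distributivity are part of the structure; 0 = 1 is not excluded). *)

Definition nu (X : comPzSemiRingType) (x : X) : X := x + x.

Definition in_nuX (X : comPzSemiRingType) (a : X) : Prop := a = a + a.

Definition ile (X : comPzSemiRingType) (a b : X) : Prop := exists x, a + x = b.

Definition supertropical (X : comPzSemiRingType) : Prop :=
  [/\ (2%:R : X) = 4%:R,
      (forall a b : X, nu a <> nu b -> a + b = a \/ a + b = b) &
      (forall a b : X, nu a = nu b -> a + b = nu a)].

(* Main.v *)
Require Import Defs.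
From HB Require Import structures.
From mathcomp Require Import all_boot all_algebra.
Import GRing.Theory.
Local Open Scope ring_scope.

Lemma no_le (X : comPzSemiRingType) (hX : supertropical X) {a x y : X} :
  nu x = a -> nu y = a -> x <> a -> y <> a -> x <> y -> ~ ile x y.
Proof.
case: hX => _ H1 H2 hx hy xa ya xy [z hz].
have [e|ne] := eqVneq (nu x) (nu z).
  apply: ya; rewrite -hz H2 //.
case: (H1 x z (elimN eqP ne)) => e.
  by apply: xy; rewrite -hz e.
by move/eqP: ne; apply; rewrite -e hz hx hy.
Qed.

Theorem lemma5p4 (X : comPzSemiRingType) (hX : supertropical X) (a : X) :
  ((exists x : X, nu x = a) <-> in_nuX a) /\
  (in_nuX a -> nu a = a /\ (forall x : X, nu x = a -> ile x a)) /\
  (forall x y : X, nu x = a -> nu y = a -> x <> a -> y <> a -> x <> y ->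
     ~ ile x y /\ ~ ile y x).
Proof.
split; [split|split].
- case=> x <-; rewrite /in_nuX /nu.
  case: hX => h24 _ _.
  have := congr1 (fun r => r * x) h24; rewrite /= !mulr_natl.
  by rewrite !mulrS mulr0n addr0 !addrA.
- by move=> h; exists a; rewrite /nu -h.
- by move=> h; split; [rewrite /nu -h | move=> x hx; exists x].
- move=> x y hx hy xa ya xy; split.
    exact: (@no_le _ hX _ _ _ hx hy xa ya xy).
  by apply: (@no_le _ hX _ _ _ hy hx ya xa) => e; apply: xy.
Qed.
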